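(* Let $G\in\mathcal{T}$ be uncontractible. Then every interior vertex of $G$ has degree at least $6$.
   Context: A torus graph with a single hole is a graph $G$ determined by a triple $(T,D,i)$ as follows. $M$ is a finite simplicial complex triangulating the torus $S^1\times S^1$ whose $1$-skeleton $T$ is a simple graph. $D$ is a simplicial complex triangulating a closed disc. $i:D\to M$ is a simplicial map which is injective on $2$-simplexes and respects adjacency of $2$-simplexes. $G$ is the subgraph of $T$ obtained by deleting the edges that are images under $i$ of interior $1$-simplexes of $D$. Its facial $3$-cycles are the $3$-cycles of $T$ bounding $2$-simplexes of $M$ that are not images of $2$-simplexes of $D$. The boundary graph $\partial G=i(\partial D)$ consists of the edges not lying in two facial $3$-cycles. For a finite simple graph $H=(V,E)$ the freedom number is $f(H)=3|V|-|E|$. $H$ is $(3,6)$-tight if $f(H)=6$ and $f(K)\ge 6$ for every subgraph $K$ with at least $3$ vertices. $\mathcal{T}$ denotes the class of $(3,6)$-tight torus graphs with a single hole. An edge is of type $FF$ if it lies in two facial $3$-cycles. $G$ is uncontractible if every $FF$ edge lies on a non-facial $3$-cycle. An interior vertex is a vertex of $G$ not lying on $\partial G$. *)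

(* Defs.v *)
From HB Require Import structures.
From mathcomp Require Import all_boot.
Set Implicit Arguments. Unset Strict Implicit. Unset Printing Implicit Defensive.

Section Complexes.
Variable V : finType.
(* A pure 2-dimensional simplicial complex is given by its set [F] of
   2-simplexes, each a 3-element vertex set; vertices are elements of [V]. *)

Definition edges (F : {set {set V}}) : {set {set V}} :=
  [set e : {set V} | (#|e| == 2) && [exists f in F, e \subset f]].

Definition nfaces (F : {set {set V}}) (e : {set V}) : nat :=
  #|[set f in F | e \subset f]|.

Definition skel_adj (F : {set {set V}}) : rel V :=
  fun a b => [set a; b] \in edges F.

Definition link_rel (F : {set {set V}}) (v : V) : rel V :=
  fun a b => [exists f in F, [&& v \in f, a \in f, b \in f, a != v, b != v & a != b]].

Definition link_vertex (F : {set {set V}}) (v a : V) : bool :=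
  (a != v) && [exists f in F, (v \in f) && (a \in f)].

Definition pure2 (F : {set {set V}}) : Prop :=
  (forall f, f \in F -> #|f| = 3) /\
  (forall v : V, exists2 f, f \in F & v \in f).

Definition links_connected (F : {set {set V}}) : Prop :=
  forall v a b, link_vertex F v a -> link_vertex F v b -> connect (link_rel F v) a b.

Definition skel_connected (F : {set {set V}}) : Prop :=
  forall a b : V, connect (skel_adj F) a b.

(* orientation: a cyclic order s f on each triangle f, coherent along
   every edge shared by two triangles *)
Definition orientable (F : {set {set V}}) : Prop :=
  exists s : {set V} -> V -> V,
    (forall f x, f \in F -> x \in f -> [/\ s f x \in f, s f x != x & s f (s f x) != x]) /\
    (forall f g u v, f \in F -> g \in F -> f != g -> u \in f -> u \in g ->
       v \in f -> v \in g -> s f u = v -> s g v = u).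

(* combinatorial triangulation of the torus S^1 x S^1: a connected closed
   orientable combinatorial 2-manifold of Euler characteristic 0 *)
Definition torus_triangulation (F : {set {set V}}) : Prop :=
  pure2 F /\
  [/\ (forall e, e \in edges F -> nfaces F e = 2),
      links_connected F,
      skel_connected F,
      orientable F
    & #|V| + #|F| = #|edges F|].

(* combinatorial triangulation of a closed disc: a connected combinatorial
   2-manifold with nonempty boundary and Euler characteristic 1 *)
Definition disc_triangulation (F : {set {set V}}) : Prop :=
  pure2 F /\
  [/\ (forall e, e \in edges F -> nfaces F e = 1 \/ nfaces F e = 2),
      links_connected F,
      skel_connected F,
      (exists2 e, e \in edges F & nfaces F e = 1)
    & #|V| + #|F| = #|edges F| + 1].

Definition interior_edges (F : {set {set V}}) : {set {set V}} :=
  [set e in edges F | nfaces F e == 2].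

Definition boundary_edges (F : {set {set V}}) : {set {set V}} :=
  [set e in edges F | nfaces F e == 1].

Definition boundary_vertices (F : {set {set V}}) : {set V} :=
  [set w | [exists e in boundary_edges F, w \in e]].

End Complexes.

Section Hole.
Variables (V W : finType) (FM : {set {set V}}) (FD : {set {set W}}) (i : W -> V).

Definition hole_map : Prop :=
  [/\ (forall d, d \in FD -> i @: d \in FM /\ #|i @: d| = 3),
      (forall d1 d2, d1 \in FD -> d2 \in FD -> i @: d1 = i @: d2 -> d1 = d2)
    & (forall d1 d2, d1 \in FD -> d2 \in FD -> #|d1 :&: d2| = 2 ->
         #|(i @: d1) :&: (i @: d2)| = 2)].

Definition G_edges : {set {set V}} :=
  edges FM :\: [set i @: e | e : {set W} in interior_edges FD].

Definition G_facial : {set {set V}} :=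
  FM :\: [set i @: d | d : {set W} in FD].

Definition G_boundary_vertices : {set V} := i @: boundary_vertices FD.

Definition G_interior_vertex (v : V) : bool := v \notin G_boundary_vertices.

Definition G_degree (v : V) : nat := #|[set e in G_edges | v \in e]|.

Definition G_tight : Prop :=
  3 * #|V| = #|G_edges| + 6 /\
  forall (S : {set V}) (EK : {set {set V}}),
    EK \subset G_edges -> (forall e, e \in EK -> e \subset S) -> 3 <= #|S| ->
    #|EK| + 6 <= 3 * #|S|.

Definition FF_edge (e : {set V}) : bool :=
  (e \in G_edges) && (#|[set f in G_facial | e \subset f]| == 2).

Definition on_nonfacial_3cycle (e : {set V}) : Prop :=
  exists a b c : V,
    [/\ #|[set a; b; c]| = 3, [set a; b] \in G_edges, [set b; c] \in G_edges
      & [set a; c] \in G_edges] /\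
    [set a; b; c] \notin G_facial /\ e \subset [set a; b; c].

Definition G_uncontractible : Prop :=
  forall e, FF_edge e -> on_nonfacial_3cycle e.

End Hole.

(* Main.v *)
Require Import Defs.
From mathcomp Require Import all_boot zify.
Set Implicit Arguments. Unset Strict Implicit. Unset Printing Implicit Defensive.

Lemma card3 (T : finType) (x y z : T) :
  x != y -> x != z -> y != z -> #|[set x; y; z]| = 3.
Proof.
move=> xy xz yz; rewrite -setUA cardsU1 cards2 !inE.
by rewrite (negbTE xy) (negbTE xz) (negbTE yz).
Qed.

Lemma three_le (T : finType) (A : {set T}) x y z :
  x \in A -> y \in A -> z \in A -> x != y -> x != z -> y != z -> 3 <= #|A|.
Proof.
move=> xA yA zA xy xz yz; rewrite -(card3 xy xz yz); apply: subset_leq_card.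
by apply/subsetP=> w /setUP [/setUP [] |] /set1P ->.
Qed.

Lemma pair_eq (T : finType) (e : {set T}) v y :
  #|e| = 2 -> v \in e -> y \in e -> v != y -> e = [set v; y].
Proof.
move=> ce ve ye vy; apply/eqP; rewrite eq_sym eqEcard ce cards2 vy andbT.
by apply/subsetP=> w; rewrite !inE => /orP [] /eqP ->.
Qed.

Lemma triple_eq (T : finType) (f : {set T}) x y z :
  #|f| = 3 -> x \in f -> y \in f -> z \in f -> x != y -> x != z -> y != z ->
  f = [set x; y; z].
Proof.
move=> cf xf yf zf xy xz yz; apply/eqP; rewrite eq_sym eqEcard cf card3 // andbT.
by apply/subsetP=> w /setUP [/setUP [] |] /set1P ->.
Qed.

Lemma pair_in (T : finType) (P : pred {set T}) a b c y z :
  y \in [set a; b; c] -> z \in [set a; b; c] -> y != z ->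
  P [set a; b] -> P [set b; c] -> P [set a; c] -> P [set y; z].
Proof.
case/setUP => [/setUP [] |] /set1P -> /setUP [/setUP [] |] /set1P ->; rewrite ?eqxx //;
 by move=> _ ? ? ?; rewrite setUC.
Qed.



Lemma card_sep (T : finType) (A : {set T}) (P : pred T) :
  #|[set x in A | P x]| = \sum_(x in A) P x.
Proof.
rewrite -sum1dep_card (eq_bigl (fun x => (x \in A) && P x)); last by [].

rewrite big_mkcondr /=.
by apply: eq_bigr => x _; case: (P x).
Qed.

Lemma handshake (T : finType) (N : {set T}) (EN : {set {set T}}) :
  (forall e, e \in EN -> #|e| = 2 /\ e \subset N) ->
  \sum_(u in N) #|[set e in EN | u \in e]| = 2 * #|EN|.
Proof.
move=> H.
rewrite (eq_bigr (fun u => \sum_(e in EN) (u \in e))); last first.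
  by move=> u _; rewrite card_sep.
rewrite exchange_big /= mulnC -sum_nat_const; apply: eq_bigr => e eEN.
have [ce sN] := H e eEN.
rewrite -ce -card_sep; apply: eq_card => x; rewrite inE.
by case xe: (x \in e); rewrite ?andbT ?andbF // (subsetP sN).
Qed.

Lemma other (T : finType) (A : {set T}) x : 1 < #|A| -> exists2 y, y \in A & x != y.
Proof.
case/card_gt1P => a [b [aA bA ab]].
case: (eqVneq x a) => [xa|xa]; last by exists a.
by exists b => //; rewrite xa.
Qed.

Lemma pair_neq (T : finType) (a b c : T) : a != b -> b != c -> [set a; b] != [set a; c].
Proof.
move=> ab bc; apply/negP => /eqP E.
have : b \in [set a; c] by rewrite -E !inE eqxx orbT.
by rewrite !inE eq_sym (negbTE ab) (negbTE bc).
Qed.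

Theorem lemma5p1 (V W : finType) (FM : {set {set V}}) (FD : {set {set W}}) (i : W -> V) :
  torus_triangulation FM -> disc_triangulation FD -> hole_map FM FD i ->
  G_tight FM FD i -> G_uncontractible FM FD i ->
  forall v : V, G_interior_vertex FD i v -> 6 <= G_degree FM FD i v.
Proof.
move=> [[cardF coverF] [nf2 _ _ _ _]] [[cardD coverD] [nfD _ _ _ _]]
  [himF hinj hadj] [tight1 tight2] unc v vint.
set GE := G_edges FM FD i.
set Fc := G_facial FM FD i.
have GE_E : forall e, e \in GE -> e \in edges FM.
  by move=> e; rewrite /GE /G_edges inE => /andP [].
have E2 : forall e, e \in edges FM -> #|e| = 2.
  by move=> e; rewrite inE => /andP [/eqP].
have E2D : forall e, e \in edges FD -> #|e| = 2.
  by move=> e; rewrite inE => /andP [/eqP].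
have F1 : forall u, [set v; u] \in GE -> forall d, d \in FD -> ~~ ([set v; u] \subset i @: d).
  move=> u vuG d dD; apply/negP => sub.
  have vu : v != u.
    by have := E2 _ (GE_E _ vuG); rewrite cards2; case: (v != u).
  have /imsetP [w wd vw] : v \in i @: d by apply: (subsetP sub); rewrite !inE eqxx.
  have /imsetP [y yd uy] : u \in i @: d by apply: (subsetP sub); rewrite !inE eqxx orbT.
  have wy : w != y by apply: contraNneq vu => wy; rewrite vw uy wy.
  have eD : [set w; y] \in edges FD.
    rewrite inE cards2 wy /=; apply/existsP; exists d; rewrite dD /=.
    by apply/subsetP => z /setUP [] /set1P ->.
  case: (nfD _ eD) => h.
    move: vint; rewrite /G_interior_vertex /G_boundary_vertices => /negP; apply; rewrite vw; apply: imset_f; rewrite inE.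
    apply/existsP; exists [set w; y]; rewrite inE eD h eqxx /=.
    by rewrite !inE eqxx.
  move: vuG; rewrite /GE /G_edges inE => /andP [] /negP nimg _; apply: nimg.
  apply/imsetP; exists [set w; y]; first by rewrite inE eD h eqxx.
  by rewrite imsetU1 imset_set1 vw uy.
have F2 : forall u f, [set v; u] \in GE -> f \in FM -> [set v; u] \subset f -> f \in Fc.
  move=> u f vuG fF sub; rewrite /Fc /G_facial inE fF andbT.
  apply/imsetP => [[d dD fd]]; move: (F1 u vuG d dD); rewrite -fd sub //.
have Fc_FM : forall f, f \in Fc -> f \in FM.
  by move=> f; rewrite /Fc /G_facial inE => /andP [].
have F3 : forall f (e : {set V}), f \in Fc -> e \subset f -> #|e| = 2 -> e \in GE.
  move=> f e fc ef ce.
  have eE : e \in edges FM.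
    by rewrite inE ce eqxx /=; apply/existsP; exists f; rewrite Fc_FM.
  rewrite /GE /G_edges inE eE andbT; apply/imsetP => [[e' e'int ee']].
  move: e'int; rewrite inE => /andP [e'D /eqP nf'].
  have /card_gt1P [d1 [d2 [d1in d2in d12]]] : 1 < nfaces FD e' by rewrite nf'.
  move: d1in d2in; rewrite !inE => /andP [d1D s1] /andP [d2D s2].
  have [i1F _] := himF _ d1D.
  have [i2F _] := himF _ d2D.
  have i12 : i @: d1 != i @: d2 by apply: contra d12 => /eqP /(hinj _ _ d1D d2D) ->.
  have fnot : forall d, d \in FD -> f != i @: d.
    move=> d dD; apply/negP => /eqP fd; move: fc; rewrite /Fc /G_facial inE.
    by rewrite fd imset_f.
  have := nf2 _ eE; rewrite /nfaces => c2.
  have : 3 <= #|[set g in FM | e \subset g]|.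
    apply: (three_le (x := f) (y := i @: d1) (z := i @: d2)) => //.
    - by rewrite inE Fc_FM.
    - by rewrite inE i1F ee' imsetS.
    - by rewrite inE i2F ee' imsetS.
    - exact: fnot.
    - exact: fnot.
  by rewrite c2.
set N := [set u | [set v; u] \in GE].
have GE2 : forall e, e \in GE -> #|e| = 2 by move=> e /GE_E /E2.
have vN : v \notin N.
  by rewrite inE; apply/negP => /GE2; rewrite setUid cards1.
have inN : forall u, u \in N -> [set v; u] \in GE by move=> u; rewrite inE.
have neq2 : forall a b, [set a; b] \in GE -> a != b.
  by move=> a b /GE2; rewrite cards2; case: (a != b).
have key : forall u, u \in N -> exists p q x,
   [/\ [/\ p \in N, q \in N & x \in N],
       [/\ [set u; p] \in GE, [set u; q] \in GE & [set u; x] \in GE]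
     & [/\ p != q, p != x & q != x]].
  move=> u uN; have vuG := inN u uN; have vu := neq2 _ _ vuG.
  have vuE := GE_E _ vuG.
  have third : forall f, f \in FM -> [set v; u] \subset f ->
      exists2 p, p \in N & [/\ [set u; p] \in GE, p != u & f = [set v; u; p]].
    move=> f fF sf.
    have /subsetPn [p pf pn] : ~~ (f \subset [set v; u]).
      by apply/negP => /subset_leq_card; rewrite cardF // cards2 vu.
    move: pn; rewrite !inE negb_or => /andP [pv pu].
    have vp : v != p by rewrite eq_sym.
    have up : u != p by rewrite eq_sym.
    have vf : v \in f by apply: (subsetP sf); rewrite !inE eqxx.
    have uf : u \in f by apply: (subsetP sf); rewrite !inE eqxx orbT.
    have fc := F2 u f vuG fF sf.
    have fe : f = [set v; u; p] by apply: triple_eq; rewrite ?cardF.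
    exists p.
      rewrite inE; apply: (F3 f) => //; last by rewrite cards2 vp.
      by apply/subsetP => z /setUP [] /set1P ->.
    split => //; apply: (F3 f) => //; last by rewrite cards2 up.
    by apply/subsetP => z /setUP [] /set1P ->.
  have := nf2 _ vuE; rewrite /nfaces => /eqP /cards2P [f1 [f2 [f12 Xeq]]].
  have : f1 \in [set g in FM | [set v; u] \subset g] by rewrite Xeq !inE eqxx.
  rewrite inE => /andP [f1F s1].
  have : f2 \in [set g in FM | [set v; u] \subset g] by rewrite Xeq !inE eqxx orbT.
  rewrite inE => /andP [f2F s2].
  have [p pN [upG pu e1]] := third f1 f1F s1.
  have [q qN [uqG qu e2]] := third f2 f2F s2.
  have pq : p != q by apply: contraNneq f12 => pq; rewrite e1 e2 pq.
  have FF : FF_edge FM FD i [set v; u].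
    rewrite /FF_edge -/GE vuG /=; apply/eqP; rewrite -(nf2 _ vuE).
    apply: eq_card => g; rewrite !inE.
    apply/andP/andP => [[gc sg]|[gF sg]]; split => //.
      by case/andP: gc.
    by have := F2 _ _ vuG gF sg; rewrite /Fc /G_facial inE.
  have [a [b [c [[c3 ab bc ac] [nf sub]]]]] := unc _ FF.
  have /subsetPn [x xT xn] : ~~ ([set a; b; c] \subset [set v; u]).
    by apply/negP => /subset_leq_card; rewrite c3 cards2 vu.
  move: xn; rewrite !inE negb_or => /andP [xv xu].
  have vx : v != x by rewrite eq_sym.
  have ux : u != x by rewrite eq_sym.
  have vT : v \in [set a; b; c] by apply: (subsetP sub); rewrite !inE eqxx.
  have uT : u \in [set a; b; c] by apply: (subsetP sub); rewrite !inE eqxx orbT.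
  have vxG : [set v; x] \in GE := pair_in (P := fun e => e \in GE) vT xT vx ab bc ac.
  have uxG : [set u; x] \in GE := pair_in (P := fun e => e \in GE) uT xT ux ab bc ac.
  have T3 := triple_eq c3 vT uT xT vu vx ux.
  exists p, q, x; split => //; first by split => //; rewrite inE.
  split => //.
    apply: contraNneq nf => px; rewrite T3 -px -e1; exact: F2 f1F s1.
  apply: contraNneq nf => qx; rewrite T3 -qx -e2; exact: F2 f2F s2.
have spk : [set e in GE | v \in e] = [set [set v; u] | u in N].
  apply/setP => e; rewrite inE; apply/andP/imsetP => [[eG ve]|[u uN ->]].
    have [y ye vy] : exists2 y, y \in e & v != y by apply: other; rewrite GE2.
    have ee := pair_eq (GE2 _ eG) ve ye vy.
    by exists y => //; rewrite inE -ee.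
  by split; [exact: inN | rewrite !inE eqxx].
have degN : G_degree FM FD i v = #|N|.
  rewrite /G_degree -/GE spk card_in_imset // => a b aN bN eq.
  have : a \in [set v; b] by rewrite -eq !inE eqxx orbT.
  rewrite !inE => /orP [/eqP av|/eqP //].
  by move: vN; rewrite -av aN.
rewrite degN.
case: (set_0Vmem N) => [N0 | [u uN]].
  exfalso.
  have [f fF vf] := coverF v.
  have [a af va] : exists2 a, a \in f & v != a by apply: other; rewrite cardF.
  have eE : [set v; a] \in edges FM.
    rewrite inE cards2 va /=; apply/existsP; exists f; rewrite fF /=.
    by apply/subsetP => z /setUP [] /set1P ->.
  have := nf2 _ eE; rewrite /nfaces => c2.
  have [g gin fg] : exists2 g, g \in [set g in FM | [set v; a] \subset g] & f != g.
    by apply: other; rewrite c2.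
  move: gin; rewrite inE => /andP [gF _].
  have /subsetPn [z zg zf] : ~~ (g \subset f).
    apply: contra fg => gf; rewrite eq_sym eqEcard gf cardF // cardF //.
  have V4 : 4 <= #|V|.
    have := max_card (z |: f); rewrite cardsU1 zf cardF //.
  have := tight2 [set~ v] GE (subxx _).
  have sub : forall e, e \in GE -> e \subset [set~ v].
    move=> e eG; apply/subsetP => y ye; rewrite in_setC1; apply/negP => /eqP yv.
    have : e \in [set e in GE | v \in e] by rewrite inE eG -yv ye.
    by rewrite spk N0 imset0 inE.
  rewrite cardsC1 => /(_ sub).
  move: tight1; rewrite -/GE; move: V4; clear; move: #|V| #|GE| => n m.
  case: n => [|n] //= V4 t1 h; have := h V4; lia.
set EN := [set e in GE | e \subset N].
set Sp := [set e in GE | v \in e].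
have ENp : forall e, e \in EN -> #|e| = 2 /\ e \subset N.
  by move=> e; rewrite inE => /andP [/GE2 ? ?].
have pairN : forall a b, a \in N -> b \in N -> [set a; b] \subset N.
  by move=> a b aN bN; apply/subsetP => z /setUP [] /set1P ->.
have cnt : forall w, w \in N -> 3 <= #|[set e in EN | w \in e]|.
  move=> w wN; have [p [q [x [[pN qN xN] [wp wq wx] [pq px qx]]]]] := key w wN.
  apply: (three_le (x := [set w; p]) (y := [set w; q]) (z := [set w; x])).
  - by rewrite inE [_ \in EN]inE wp pairN // !inE eqxx.
  - by rewrite inE [_ \in EN]inE wq pairN // !inE eqxx.
  - by rewrite inE [_ \in EN]inE wx pairN // !inE eqxx.
  - exact: pair_neq (neq2 _ _ wp) pq.
  - exact: pair_neq (neq2 _ _ wp) px.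
  - exact: pair_neq (neq2 _ _ wq) qx.
have hs := handshake ENp.
have ge3 : \sum_(w in N) 3 <= \sum_(w in N) #|[set e in EN | w \in e]|.
  by apply: leq_sum => w wN; exact: cnt.
rewrite hs sum_nat_const in ge3.
have [p [q [x [[pN qN xN] _ [pq px qx]]]]] := key u uN.
have N3 : 3 <= #|N| by exact: three_le pN qN xN pq px qx.
have I0 : EN :&: Sp = set0.
  apply/setP => e; rewrite !inE; apply/negP => /andP [/andP [_ eN] /andP [_ ve]].
  by move: vN; rewrite (subsetP eN).
have cardEK : #|EN :|: Sp| = #|EN| + #|N|.
  by rewrite cardsU I0 cards0 subn0 /Sp spk card_in_imset // => a b aN bN eq;
    [have : a \in [set v; b] by rewrite -eq !inE eqxx orbT];
    rewrite !inE => /orP [/eqP av|/eqP //]; move: vN; rewrite -av aN.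
have := tight2 (v |: N) (EN :|: Sp).
rewrite cardEK cardsU1 vN.
have sub1 : EN :|: Sp \subset GE.
  by apply/subsetP => e /setUP []; rewrite inE => /andP [].
have sub2 : forall e, e \in EN :|: Sp -> e \subset v |: N.
  move=> e /setUP [].
    rewrite inE => /andP [_ eN]; apply: subset_trans eN _; exact: subsetUr.
  rewrite /Sp spk => /imsetP [w wN ->].
  by apply: setUS; rewrite sub1set.
move=> /(_ sub1 sub2); rewrite add1n ltnS => /(_ (leq_trans (isT : 2 <= 3) N3)).
lia.
Qed.
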